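(* Let $m\ge1$ and let $q^{(1)}_k,\dots,q^{(m)}_k$, $k=1,\dots,d$, be given non-negative numbers. Over all $m$-tuples $(Q^{(1)},\dots,Q^{(m)})$ of $d\times d$ positive semidefinite matrices with prescribed diagonals $Q^{(i)}_{kk}=q^{(i)}_k$ for all $i,k$, the maximal value of the operator norm $\|Q^{(1)}+\dots+Q^{(m)}\|_\infty$ is attained when each $Q^{(i)}$ is the rank one matrix with non-negative entries $Q^{(i)}_{jk}=\sqrt{q^{(i)}_jq^{(i)}_k}$.
   Context: $\|\cdot\|_\infty$ denotes the operator (spectral) norm. *)

(* Defs.v *)
From HB Require Import structures.
From mathcomp Require Import all_boot all_order all_algebra.
From mathcomp Require Import complex.
From mathcomp Require Import classical_sets reals.
Set Implicit Arguments. Unset Strict Implicit. Unset Printing Implicit Defensive.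
Import Order.TTheory GRing.Theory Num.Theory.
Local Open Scope ring_scope.
Local Open Scope classical_set_scope.

Definition ctrmx (R : realType) (m n : nat) (A : 'M[R[i]]_(m, n)) : 'M[R[i]]_(n, m) :=
  (map_mx Num.conj A)^T.

Definition vnorm (R : realType) (d : nat) (x : 'cV[R[i]]_d) : R :=
  Num.sqrt (complex.Re (\sum_(j < d) `|x j 0| ^+ 2)).

Definition opnorm (R : realType) (d : nat) (A : 'M[R[i]]_d) : R :=
  sup [set r : R | exists x : 'cV[R[i]]_d, vnorm x <= 1 /\ r = vnorm (A *m x)].

Definition psd (R : realType) (d : nat) (A : 'M[R[i]]_d) : Prop :=
  forall x : 'cV[R[i]]_d, 0 <= (ctrmx x *m A *m x) 0 0.

Definition rank1_sqrt (R : realType) (d : nat) (q : 'I_d -> R) : 'M[R[i]]_d :=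
  \matrix_(j, k) (Num.sqrt (q j * q k))%:C%C.

(* Main.v *)
Require Import Defs.
From HB Require Import structures.
From mathcomp Require Import all_boot all_order all_algebra.
From mathcomp Require Import complex.
From mathcomp Require Import classical_sets reals ring lra.
Import Order.TTheory GRing.Theory Num.Theory.
Local Open Scope ring_scope.
Local Open Scope classical_set_scope.

Import Normc.
Section S.
Variable R : realType.
Local Notation C := R[i].

Lemma normCE (z : C) : `|z| = (normc z)%:C%C.
Proof. by []. Qed.

Lemma normc_ge0 (z : C) : 0 <= normc z.
Proof. by case: z => a b /=; rewrite sqrtr_ge0. Qed.

Lemma lec_normc (z w : C) : (normc z <= normc w) = (`|z| <= `|w|).
Proof. by rewrite !normCE lecR. Qed.

Lemma vnormE d (x : 'cV[C]_d) : vnorm x = Num.sqrt (\sum_j normc (x j 0) ^+ 2).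
Proof.
rewrite /vnorm; congr Num.sqrt.
under eq_bigr do rewrite normCE -rmorphXn.
by rewrite -rmorph_sum.
Qed.

Lemma vnorm_le d (z w : 'cV[C]_d) :
  (forall j, `|z j 0| <= `|w j 0|) -> vnorm z <= vnorm w.
Proof.
move=> H; rewrite !vnormE ler_sqrt ?sumr_ge0 // => [|j _]; last by rewrite sqr_ge0.
apply: ler_sum => j _; rewrite lerXn2r ?nnegrE ?normc_ge0 //.
by rewrite lec_normc.
Qed.

Lemma form_expand d (A : 'M[C]_d) (x : 'cV[C]_d) :
  (ctrmx x *m A *m x) 0 0 = \sum_j \sum_k Num.conj (x j 0) * A j k * x k 0.
Proof.
rewrite mxE; under eq_bigr do rewrite mxE big_distrl /=.
rewrite exchange_big /=; apply: eq_bigr => j _; apply: eq_bigr => k _.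
by rewrite /ctrmx !mxE.
Qed.

Lemma sum2 d (F : 'I_d -> C) j k : j != k ->
  (forall l, l != j -> l != k -> F l = 0) -> \sum_l F l = F j + F k.
Proof.
move=> jk H; rewrite (bigD1 j) //= (bigD1 k) 1?eq_sym //= big1 ?addr0 ?addrA //.
by move=> l /andP[lk lj]; apply: H.
Qed.

Lemma psd2 d (A : 'M[C]_d) j k : psd A -> j != k -> forall t s,
  0 <= Num.conj t * A j j * t + Num.conj t * A j k * s
     + Num.conj s * A k j * t + Num.conj s * A k k * s.
Proof.
move=> H jk t s; have := H (\col_l (if l == j then t else if l == k then s else 0)).
rewrite form_expand (@sum2 _ _ _ _ jk); last first.
  move=> l lj lk; rewrite big1 // => l' _; rewrite !mxE (negbTE lj) (negbTE lk).
  by rewrite rmorph0 !mul0r.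
rewrite (@sum2 _ _ _ _ jk); last by move=> l lj lk; rewrite !mxE (negbTE lj) (negbTE lk) mulr0.
rewrite (@sum2 _ _ _ _ jk); last by move=> l lj lk; rewrite !mxE (negbTE lj) (negbTE lk) mulr0.
by rewrite !mxE eqxx eq_sym (negbTE jk) eqxx !addrA.
Qed.
Lemma herm_bound (a b : R) (u v : C) : 0 <= a -> 0 <= b ->
 (forall t s : C, 0 <= Num.conj t * a%:C%C * t + Num.conj t * u * s
    + Num.conj s * v * t + Num.conj s * b%:C%C * s) ->
 `|u| <= (Num.sqrt (a*b))%:C%C.
Proof.
case: u v => u1 u2 [v1 v2] a0 b0 H.
move: (H (1 +i* 0)%C (1 +i* 0)%C); rewrite -[Num.conj _]/(_ +i* _)%C; simpc.
move=> /andP[/eqP h1 _].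
move: (H (1 +i* 0)%C (0 +i* 1)%C); rewrite -![Num.conj _]/(_ +i* _)%C; simpc.
move=> /andP[/eqP h2 _].
move: (H (b +i* 0)%C (- u1 +i* u2)%C); rewrite -![Num.conj _]/(_ +i* _)%C; simpc.
move=> /andP[_ h3].
move: (H ((u1^+2 + u2^+2) +i* 0)%C (- ((a+1) * u1) +i* ((a+1) * u2))%C); rewrite -![Num.conj _]/(_ +i* _)%C; simpc.
move=> /andP[_ h4].
have ev1 : v1 = u1 by lra.
have ev2 : v2 = - u2 by lra.
subst v1 v2.
set c := u1 ^+ 2 + u2 ^+ 2.
have c0 : 0 <= c by rewrite /c addr_ge0 ?sqr_ge0.
have e3 : 0 <= b * (a * b - c).
  by move: h3; congr (_ <= _); rewrite /c; ring.
have e4 : 0 <= (a + 1)^+2 * b * c - (a + 2) * c ^+ 2.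
  by move: h4; congr (_ <= _); rewrite /c; ring.
rewrite /= ler_sqrt ?mulr_ge0 //.
have [bz|bp] := eqVneq b 0.
  subst b; rewrite mulr0.
  have : (a + 2) * c ^+ 2 <= 0 by nra.
  nra.
have bp' : 0 < b by rewrite lt_def bp.
nra.
Qed.
Lemma entry_bound d (A : 'M[C]_d) (q : 'I_d -> R) :
  psd A -> (forall k, 0 <= q k) -> (forall k, A k k = (q k)%:C%C) ->
  forall j k, `|A j k| <= (Num.sqrt (q j * q k))%:C%C.
Proof.
move=> H q0 Hd j k; have [<-|jk] := eqVneq j k.
  rewrite Hd normCE lecR /= expr0n /= addr0 -expr2 //.
apply: (@herm_bound _ _ _ (A k j)) => // t s; have := @psd2 _ A j k H jk t s.
by rewrite !Hd.
Qed.
Lemma mulmx_bound d (M N : 'M[C]_d) (x : 'cV[C]_d) :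
  (forall j k, `|M j k| <= N j k) ->
  vnorm (M *m x) <= vnorm (N *m (\col_k `|x k 0|)).
Proof.
move=> H; apply: vnorm_le => j.
have h : `|(M *m x) j 0| <= (N *m (\col_k `|x k 0|)) j 0.
  rewrite !mxE; apply: le_trans (ler_norm_sum _ _ _) _; apply: ler_sum => k _.
  by rewrite mxE normrM; apply: ler_wpM2r => //.
by rewrite (ger0_norm (le_trans (normr_ge0 _) h)).
Qed.

Lemma vnorm_col d (x : 'cV[C]_d) : vnorm (\col_k `|x k 0|) <= vnorm x.
Proof. by apply: vnorm_le => j; rewrite mxE normr_id. Qed.

Lemma coord_le1 d (x : 'cV[C]_d) k : vnorm x <= 1 -> `|x k 0| <= 1.
Proof.
rewrite vnormE -sqrtr1 ler_sqrt // => H.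
have h2 : normc (x k 0) ^+ 2 <= 1.
  apply: le_trans H; rewrite (bigD1 k) //= lerDl sumr_ge0 // => l _.
  by rewrite sqr_ge0.
rewrite expr_le1 ?normc_ge0 // in h2.
by rewrite normCE; change (1 : C) with ((1:R)%:C%C); rewrite lecR.
Qed.

Lemma opset_ub d (M : 'M[C]_d) :
  has_ubound [set r | exists x : 'cV[C]_d, vnorm x <= 1 /\ r = vnorm (M *m x)].
Proof.
exists (vnorm (\col_j \sum_k `|M j k|)) => r [x [x1 ->]].
apply: vnorm_le => j; rewrite !mxE [X in _ <= X]ger0_norm ?sumr_ge0 //.
apply: le_trans (ler_norm_sum _ _ _) _; apply: ler_sum => k _.
rewrite normrM -[X in _ <= X]mulr1; apply: ler_wpM2l => //.
exact: coord_le1.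
Qed.
Lemma conjR (r : R) : Num.conj (r%:C%C) = r%:C%C :> C.
Proof. by rewrite -[Num.conj _]/(_ +i* _)%C oppr0. Qed.

Lemma rank1_psd d (q : 'I_d -> R) : (forall k, 0 <= q k) -> psd (rank1_sqrt q).
Proof.
move=> q0 x; rewrite form_expand.
set z := \sum_k (Num.sqrt (q k))%:C%C * x k 0.
have -> : \sum_j \sum_k Num.conj (x j 0) * rank1_sqrt q j k * x k 0
          = Num.conj z * z.
  rewrite rmorph_sum big_distrl; apply: eq_bigr => j _.
  rewrite big_distrr; apply: eq_bigr => k _.
  by rewrite mxE sqrtrM // rmorphM /= rmorphM /= conjR; ring.
by rewrite mulrC mul_conjC_ge0.
Qed.
End S.

Theorem mainTheorem5 (R : realType) (m d : nat) (q : 'I_m -> 'I_d -> R) :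
  (0 < m)%N ->
  (forall i k, 0 <= q i k) ->
  [/\ (forall i, psd (rank1_sqrt (q i))),
      (forall i k, rank1_sqrt (q i) k k = (q i k)%:C%C) &
      (forall Q : 'I_m -> 'M[R[i]]_d,
          (forall i, psd (Q i)) ->
          (forall i k, Q i k k = (q i k)%:C%C) ->
          opnorm (\sum_(i < m) Q i) <= opnorm (\sum_(i < m) rank1_sqrt (q i)))].
Proof.
move=> _ q0; split.
- by move=> i; apply: rank1_psd.
- by move=> i k; rewrite mxE -expr2 sqrtr_sqr ger0_norm.
move=> Q Qpsd Qd.
set P := \sum_(i < m) rank1_sqrt (q i).
have HB : forall j k, `|(\sum_(i < m) Q i) j k| <= P j k.
  move=> j k; rewrite /P !summxE; apply: le_trans (ler_norm_sum _ _ _) _.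
  apply: ler_sum => i _; rewrite mxE; exact: entry_bound.
rewrite /opnorm; apply: ge_sup.
  by exists (vnorm ((\sum_(i < m) Q i) *m 0)), 0; split => //;
     rewrite vnormE big1 ?sqrtr0 // => j _; rewrite mxE normc0 expr0n.
move=> r [x [x1 ->]].
apply: le_trans (@mulmx_bound _ _ _ _ x HB) _.
apply: ub_le_sup; first exact: opset_ub.
exists (\col_k `|x k 0|); split => //.
exact: le_trans (@vnorm_col _ _ x) x1.
Qed.
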